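(* For every integer $n\geqslant 1$ there exist a family $\mathscr B$ of boxes in $\mathbb R^2$ and two lines $l_1,l_2$ parallel to the $x$-axis such that every box of $\mathscr B$ intersects at least one of $l_1,l_2$, $\nu(\mathscr B)=n$, and $\tau(\mathscr B)=\left[\frac{3n}{2}\right]$.
   Context: A box in $\mathbb R^2$ is a set $[a_1,b_1]\times[a_2,b_2]$ with sides parallel to the coordinate axes. For a family $\mathscr B$ of boxes, $\nu(\mathscr B)$ is the maximal number of pairwise disjoint members of $\mathscr B$, and $\tau(\mathscr B)$ is the minimal number of points in a set meeting every member of $\mathscr B$. $[x]$ denotes the integer part of $x$. *)

(* Defs.v *)
From Stdlib Require Import Reals List Arith.
Import ListNotations.
Open Scope R_scope.

(* A box [a1,b1] x [a2,b2] in R^2, represented by ((a1,b1),(a2,b2)). *)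
Definition box : Type := ((R * R) * (R * R))%type.
Definition point : Type := (R * R)%type.

Definition is_box (B : box) : Prop :=
  fst (fst B) <= snd (fst B) /\ fst (snd B) <= snd (snd B).

Definition in_box (p : point) (B : box) : Prop :=
  fst (fst B) <= fst p <= snd (fst B) /\ fst (snd B) <= snd p <= snd (snd B).

Definition disjoint_boxes (B C : box) : Prop :=
  forall p : point, ~ (in_box p B /\ in_box p C).

Definition box_family : Type := box -> Prop.

Definition pairwise_disjoint (L : list box) : Prop :=
  ForallOrdPairs disjoint_boxes L.

Definition nu_eq (F : box_family) (n : nat) : Prop :=
  (exists L : list box, length L = n /\ NoDup L /\ Forall F L /\ pairwise_disjoint L)
  /\ (forall L : list box, NoDup L -> Forall F L -> pairwise_disjoint L ->
        (length L <= n)%nat).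

Definition pierces (P : list point) (F : box_family) : Prop :=
  forall B, F B -> exists p, In p P /\ in_box p B.

Definition tau_eq (F : box_family) (k : nat) : Prop :=
  (exists P : list point, length P = k /\ pierces P F)
  /\ (forall P : list point, pierces P F -> (k <= length P)%nat).

Definition meets_hline (B : box) (c : R) : Prop :=
  fst (snd B) <= c <= snd (snd B).

(* Main.v *)
Require Import Defs.
From Stdlib Require Import Reals List Arith Lra Lia.
Import ListNotations.
Open Scope R_scope.

Definition g1 (o : R) : box := ((o, o+1), (0,3)).
Definition g2 (o : R) : box := ((o+1, o+3), (3,4)).
Definition g3 (o : R) : box := ((o+3, o+4), (1,3)).
Definition g4 (o : R) : box := ((o+2, o+4), (0,1)).
Definition g5 (o : R) : box := ((o+1, o+2), (0,0)).
Definition q1 (o : R) : point := (o+1, 3).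
Definition q2 (o : R) : point := (o+3, 3).
Definition q3 (o : R) : point := (o+3, 1).
Definition q4 (o : R) : point := (o+2, 0).
Definition q5 (o : R) : point := (o+1, 0).
Definition single : box := ((-10, -9), (0, 0)).
Definition s1 : point := (-10, 0).
Definition s2 : point := (-9, 0).

Definition Gadget (o : R) (B : box) : Prop :=
  B = g1 o \/ B = g2 o \/ B = g3 o \/ B = g4 o \/ B = g5 o.

Fixpoint Fam (m r : nat) : box_family :=
  match m with
  | O => fun B => r = 1%nat /\ B = single
  | S k => fun B => Fam k r B \/ Gadget (10 * INR k) B
  end.

Ltac gsolve := unfold in_box, is_box, meets_hline, disjoint_boxes,
  g1, g2, g3, g4, g5, q1, q2, q3, q4, q5, single, s1, s2 in *; simpl in *; lra.

Lemma Fam_box m r B : Fam m r B -> is_box B.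
Proof.
  induction m; simpl.
  - intros [_ ->]; gsolve.
  - intros [H|[->|[->|[->|[->| ->]]]]]; auto; gsolve.
Qed.

Lemma Fam_line m r B : Fam m r B -> meets_hline B 0 \/ meets_hline B 3.
Proof.
  induction m; simpl.
  - intros [_ ->]; left; gsolve.
  - intros [H|[->|[->|[->|[->| ->]]]]]; auto;
      first [left; gsolve | right; gsolve].
Qed.

Lemma Fam_x m r B : Fam m r B -> snd (fst B) <= 10 * INR m - 6.
Proof.
  induction m; simpl Fam; rewrite ?S_INR.
  - intros [_ ->]; simpl; lra.
  - pose proof (pos_INR m).
    intros [HH|[->|[->|[->|[->| ->]]]]]; try (apply IHm in HH); gsolve.
Qed.

Lemma sep B C : snd (fst C) < fst (fst B) -> disjoint_boxes B C.
Proof. intros H p [[[h1 h2] _] [[h3 h4] _]]; lra. Qed.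

Lemma gadget_lb o P :
  (forall B, Gadget o B -> exists p, In p P /\ in_box p B) -> (3 <= length P)%nat.
Proof.
  intros H.
  destruct (H (g1 o)) as [p1 [i1 h1]]; [left; auto|].
  destruct (H (g2 o)) as [p2 [i2 h2]]; [right; left; auto|].
  destruct (H (g3 o)) as [p3 [i3 h3]]; [do 2 right; left; auto|].
  destruct (H (g4 o)) as [p4 [i4 h4]]; [do 3 right; left; auto|].
  destruct (H (g5 o)) as [p5 [i5 h5]]; [do 4 right; auto|].
  destruct P as [|a [|b [|c P]]]; simpl; try lia; exfalso; simpl in *.
  - contradiction.
  - destruct i1 as [<-|[]]; destruct i3 as [<-|[]]. gsolve.
  - destruct i1 as [<-|[<-|[]]]; destruct i2 as [<-|[<-|[]]];
    destruct i3 as [<-|[<-|[]]]; destruct i4 as [<-|[<-|[]]];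
    destruct i5 as [<-|[<-|[]]]; gsolve.
Qed.

Definition ltb (o : R) (p : point) : bool :=
  if Rlt_dec (fst p) o then true else false.

Lemma tau_lb m r P : (r <= 1)%nat -> pierces P (Fam m r) -> (3 * m + r <= length P)%nat.
Proof.
  intros Hr. revert P. induction m; intros P HP.
  - destruct r as [|[|r]]; try lia.
    destruct (HP single) as [p [Hp _]]; [simpl; auto|].
    destruct P; simpl in *; [contradiction|lia].
  - set (o := 10 * INR m).
    rewrite <- (filter_length (ltb o) P).
    assert (A : (3 * m + r <= length (filter (ltb o) P))%nat).
    { apply IHm. intros B HB. destruct (HP B) as [p [Hp Hin]]; [simpl; auto|].
      exists p; split; auto. apply filter_In; split; auto.
      unfold ltb. destruct (Rlt_dec (fst p) o); auto. exfalso.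
      pose proof (Fam_x _ _ _ HB). destruct Hin as [[_ h] _]. unfold o in *; lra. }
    assert (Bq : (3 <= length (filter (fun x => negb (ltb o x)) P))%nat).
    { apply (gadget_lb o). intros B HB. destruct (HP B) as [p [Hp Hin]]; [simpl; auto|].
      exists p; split; auto. apply filter_In; split; auto.
      unfold ltb. destruct (Rlt_dec (fst p) o); auto. exfalso.
      destruct HB as [->|[->|[->|[->| ->]]]]; gsolve. }
    lia.
Qed.

Fixpoint PP (m r : nat) : list point :=
  match m with
  | O => if Nat.eqb r 1 then [s1] else []
  | S k => [q1 (10 * INR k); q3 (10 * INR k); q5 (10 * INR k)] ++ PP k r
  end.

Lemma PP_len m r : (r <= 1)%nat -> length (PP m r) = (3 * m + r)%nat.
Proof.
  intros Hr; induction m; simpl.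
  - destruct r as [|[|]]; simpl; lia.
  - rewrite IHm; lia.
Qed.

Lemma PP_pierce m r : pierces (PP m r) (Fam m r).
Proof.
  induction m; intros B HB; simpl in *.
  - destruct HB as [-> ->]. exists s1; simpl; split; auto. gsolve.
  - destruct HB as [H|H].
    + destruct (IHm B H) as [p [Hp Hi]]; exists p; split; auto; do 3 right; auto.
    + set (o := 10 * INR m) in *.
      destruct H as [->|[->|[->|[->| ->]]]].
      * exists (q1 o); split; [auto|gsolve].
      * exists (q1 o); split; [auto|gsolve].
      * exists (q3 o); split; [auto|gsolve].
      * exists (q3 o); split; [auto|gsolve].
      * exists (q5 o); split; [auto|gsolve].
Qed.

Fixpoint LL (m r : nat) : list box :=
  match m with
  | O => if Nat.eqb r 1 then [single] else []
  | S k => g1 (10 * INR k) :: g3 (10 * INR k) :: LL k r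
  end.

Lemma LL_len m r : (r <= 1)%nat -> length (LL m r) = (2 * m + r)%nat.
Proof.
  intros Hr; induction m; simpl.
  - destruct r as [|[|]]; simpl; lia.
  - rewrite IHm; lia.
Qed.

Lemma LL_fam m r : Forall (Fam m r) (LL m r).
Proof.
  induction m; simpl.
  - destruct r as [|[|]]; simpl; constructor; auto.
  - constructor; [right; left; auto|]. constructor; [right; right; right; left; auto|].
    eapply Forall_impl; [|exact IHm]. intros; left; auto.
Qed.

Lemma LL_disj m r : pairwise_disjoint (LL m r).
Proof.
  unfold pairwise_disjoint. induction m; simpl.
  - destruct r as [|[|]]; simpl; repeat constructor.
  - assert (Hx : Forall (fun B => snd (fst B) <= 10 * INR m - 6) (LL m r)).
    { eapply Forall_impl; [|exact (LL_fam m r)]. apply Fam_x. }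
    constructor; [constructor|constructor].
    + intros p [h1 h2]; gsolve.
    + eapply Forall_impl; [|exact Hx]. intros a Ha. apply sep. simpl; lra.
    + eapply Forall_impl; [|exact Hx]. intros a Ha. apply sep. simpl; lra.
    + auto.
Qed.

Lemma FOP_nodup L : ForallOrdPairs disjoint_boxes L -> Forall is_box L -> NoDup L.
Proof.
  induction 1 as [|a l Ha Hl IH]; intros Hb; constructor.
  - inversion Hb; subst. intro Hin. rewrite Forall_forall in Ha.
    apply (Ha a Hin (fst (fst a), fst (snd a))). destruct H1.
    unfold in_box; simpl; lra.
  - inversion Hb; auto.
Qed.

Definition inb (B : box) (p : point) : bool :=
  if Rle_dec (fst (fst B)) (fst p) then
  if Rle_dec (fst p) (snd (fst B)) then
  if Rle_dec (fst (snd B)) (snd p) then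
  if Rle_dec (snd p) (snd (snd B)) then true else false else false else false else false.

Lemma inb_spec B p : inb B p = true <-> in_box p B.
Proof.
  unfold inb, in_box.
  repeat match goal with |- context [Rle_dec ?a ?b] => destruct (Rle_dec a b) end;
  split; intros; try tauto; try discriminate; lra.
Qed.

Lemma filter_same (B C : box) (Q : list point) : disjoint_boxes B C ->
  filter (inb C) (filter (fun x => negb (inb B x)) Q) = filter (inb C) Q.
Proof.
  intros Hd. induction Q as [|p Q IH]; simpl; auto.
  destruct (inb B p) eqn:E1; simpl.
  - destruct (inb C p) eqn:E2; auto. exfalso.
    apply (Hd p); split; apply inb_spec; auto.
  - destruct (inb C p); simpl; rewrite IH; auto.
Qed.

Lemma lemA L : pairwise_disjoint L -> forall Q,
  Forall (fun B => 2 <= length (filter (inb B) Q))%nat L -> (2 * length L <= length Q)%nat.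
Proof.
  induction 1 as [|a l Ha Hl IH]; intros Q HF; simpl; [lia|].
  inversion HF; subst.
  rewrite <- (filter_length (inb a) Q).
  assert (2 * length l <= length (filter (fun x => negb (inb a x)) Q))%nat.
  { apply IH. rewrite Forall_forall in *. intros C HC.
    rewrite filter_same; [|apply Ha; auto]. apply H2; auto. }
  lia.
Qed.

Lemma two_len (B : box) Q p q : p <> q -> In p Q -> In q Q -> in_box p B -> in_box q B ->
  (2 <= length (filter (inb B) Q))%nat.
Proof.
  intros Hne Hp Hq Hbp Hbq.
  assert (Ip : In p (filter (inb B) Q)) by (apply filter_In; split; auto; apply inb_spec; auto).
  assert (Iq : In q (filter (inb B) Q)) by (apply filter_In; split; auto; apply inb_spec; auto).
  destruct (filter (inb B) Q) as [|a [|b l]]; simpl in *; try lia; try contradiction.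
  destruct Ip as [<-|[]]; destruct Iq as [<-|[]]; contradiction.
Qed.

Fixpoint QQ (m r : nat) : list point :=
  match m with
  | O => if Nat.eqb r 1 then [s1; s2] else []
  | S k => [q1 (10 * INR k); q2 (10 * INR k); q3 (10 * INR k); q4 (10 * INR k); q5 (10 * INR k)] ++ QQ k r
  end.

Lemma QQ_len m r : (r <= 1)%nat -> length (QQ m r) = (5 * m + 2 * r)%nat.
Proof.
  intros Hr; induction m; simpl.
  - destruct r as [|[|]]; simpl; lia.
  - rewrite IHm; lia.
Qed.

Ltac neqp := let H := fresh in intro H; injection H; intros;
  unfold q1, q2, q3, q4, q5, s1, s2 in *; lra.

Lemma QQ_two m r B : Fam m r B -> (2 <= length (filter (inb B) (QQ m r)))%nat.
Proof.
  intros HB.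
  assert (exists p q, p <> q /\ In p (QQ m r) /\ In q (QQ m r) /\ in_box p B /\ in_box q B)
    as [p [q [h1 [h2 [h3 [h4 h5]]]]]].
  2: exact (two_len B _ p q h1 h2 h3 h4 h5).
  induction m; simpl in *.
  - destruct HB as [-> ->]. simpl. exists s1, s2. repeat split; auto; try gsolve.
    unfold s1, s2; intro H; injection H; lra.
  - destruct HB as [H|H].
    + destruct (IHm H) as [p [q [h1 [h2 [h3 [h4 h5]]]]]].
      exists p, q; split; [auto|]; split; [do 5 right; auto|]; split; [do 5 right; auto|]; auto.
    + set (o := 10 * INR m) in *.
      destruct H as [->|[->|[->|[->| ->]]]].
      * exists (q1 o), (q5 o); repeat split; try neqp; try gsolve; simpl; auto 6.
      * exists (q1 o), (q2 o); repeat split; try neqp; try gsolve; simpl; auto 6.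
      * exists (q2 o), (q3 o); repeat split; try neqp; try gsolve; simpl; auto 6.
      * exists (q3 o), (q4 o); repeat split; try neqp; try gsolve; simpl; auto 6.
      * exists (q4 o), (q5 o); repeat split; try neqp; try gsolve; simpl; auto 6.
Qed.


Lemma FOP_filter (f : box -> bool) L : pairwise_disjoint L -> pairwise_disjoint (filter f L).
Proof.
  unfold pairwise_disjoint. induction 1 as [|a l Ha Hl IH]; simpl; [constructor|].
  destruct (f a); auto. constructor; auto.
  rewrite Forall_forall in *. intros x Hx. apply filter_In in Hx. apply Ha; tauto.
Qed.

Lemma gadget_ub o L : pairwise_disjoint L -> Forall (Gadget o) L -> (length L <= 2)%nat.
Proof.
  intros HD HF.
  pose proof (lemA L HD [q1 o; q2 o; q3 o; q4 o; q5 o]) as A.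
  assert (2 * length L <= length [q1 o; q2 o; q3 o; q4 o; q5 o])%nat as HH; [|simpl in HH; lia].
  apply A.
  eapply Forall_impl; [|exact HF]. intros B H.
  destruct H as [->|[->|[->|[->| ->]]]].
  * apply (two_len _ _ (q1 o) (q5 o)); try neqp; try gsolve; simpl; auto 6.
  * apply (two_len _ _ (q1 o) (q2 o)); try neqp; try gsolve; simpl; auto 6.
  * apply (two_len _ _ (q2 o) (q3 o)); try neqp; try gsolve; simpl; auto 6.
  * apply (two_len _ _ (q3 o) (q4 o)); try neqp; try gsolve; simpl; auto 6.
  * apply (two_len _ _ (q4 o) (q5 o)); try neqp; try gsolve; simpl; auto 6.
Qed.

Definition bl (o : R) (B : box) : bool :=
  if Rlt_dec (snd (fst B)) o then true else false.

Lemma nu_ub m r L : (r <= 1)%nat -> pairwise_disjoint L -> Forall (Fam m r) L ->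
  (length L <= 2 * m + r)%nat.
Proof.
  intros Hr. revert L. induction m; intros L HD HF.
  - pose proof (lemA L HD (QQ 0 r)) as A. rewrite QQ_len in A by lia.
    assert (2 * length L <= 5 * 0 + 2 * r)%nat; [|lia]. apply A.
    eapply Forall_impl; [|exact HF]. intros; apply QQ_two; auto.
  - set (o := 10 * INR m).
    rewrite <- (filter_length (bl o) L).
    assert (length (filter (bl o) L) <= 2 * m + r)%nat.
    { apply IHm. apply FOP_filter; auto.
      rewrite Forall_forall in *. intros B HB. apply filter_In in HB as [HB Hb].
      destruct (HF B HB) as [H|H]; auto. exfalso. unfold bl in Hb.
      destruct (Rlt_dec _ _); [|discriminate].
      destruct H as [->|[->|[->|[->| ->]]]]; unfold o in *; gsolve. }
    assert (length (filter (fun x => negb (bl o x)) L) <= 2)%nat.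
    { apply (gadget_ub o). apply FOP_filter; auto.
      rewrite Forall_forall in *. intros B HB. apply filter_In in HB as [HB Hb].
      destruct (HF B HB) as [H0|H0]; auto. exfalso. unfold bl in Hb.
      destruct (Rlt_dec _ _); [discriminate|].
      apply Fam_x in H0. unfold o in *; lra. }
    lia.
Qed.

Theorem mainTheorem3 : forall n : nat, (1 <= n)%nat ->
  exists (F : box_family) (c1 c2 : R),
    c1 <> c2 /\
    (forall B : box, F B -> is_box B) /\
    (forall B : box, F B -> meets_hline B c1 \/ meets_hline B c2) /\
    nu_eq F n /\
    tau_eq F ((3 * n) / 2)%nat.
Proof.
  intros n _.
  pose proof (Nat.div_mod_eq n 2) as En.
  pose proof (Nat.mod_upper_bound n 2 ltac:(lia)) as Hr.
  set (m := (n / 2)%nat) in *. set (r := (n mod 2)%nat) in *.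
  assert (Ht : ((3 * n) / 2)%nat = (3 * m + r)%nat).
  { symmetry. apply (Nat.div_unique _ _ _ r); lia. }
  rewrite Ht.
  exists (Fam m r), 0, 3. split; [|split; [|split; [|split; [split|split]]]].
  - lra.
  - apply Fam_box.
  - apply Fam_line.
  - exists (LL m r). split; [|split; [|split]].
    + rewrite LL_len; lia.
    + apply FOP_nodup; [apply LL_disj|]. eapply Forall_impl; [|apply LL_fam]. apply Fam_box.
    + apply LL_fam.
    + apply LL_disj.
  - intros L _ HF HD. pose proof (nu_ub m r L ltac:(lia) HD HF). lia.
  - exists (PP m r). split; [apply PP_len; lia|apply PP_pierce].
  - intros P HP. apply tau_lb; auto; lia.
Qed.
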